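(* Let $\mathcal{A}\subseteq\mathbb{R}^3$ and let $\varphi_1,\ldots,\varphi_N\in L^2(\mathcal{A})$ be pairwise non-parallel with correlation matrix $\boldsymbol{\Psi}=\int_{\mathcal{A}}\boldsymbol{\varphi}^{\mathsf{H}}(\mathbf{r})\boldsymbol{\varphi}(\mathbf{r})\,\mathrm{d}\mathbf{r}\in\mathbb{C}^{N\times N}$ positive definite, where $\boldsymbol{\varphi}(\mathbf{r})=[\varphi_1(\mathbf{r}),\ldots,\varphi_N(\mathbf{r})]$. Let $\boldsymbol{\Psi}=\mathbf{U}\boldsymbol{\Lambda}\mathbf{U}^{\mathsf{H}}$ be an eigendecomposition with $\mathbf{U}$ unitary and $\boldsymbol{\Lambda}=\mathrm{diag}(\lambda_1,\ldots,\lambda_N)$, $\lambda_n>0$. For a Hermitian $\mathbf{M}\in\mathbb{C}^{N\times N}$ define the operator $T_{\mathbf{M}}$ on $L^2(\mathcal{A})$ with kernel $\delta(\mathbf{r}-\mathbf{r}')-\boldsymbol{\varphi}(\mathbf{r})\mathbf{M}\boldsymbol{\varphi}^{\mathsf{H}}(\mathbf{r}')$, i.e. $(T_{\mathbf{M}}f)(\mathbf{r})=f(\mathbf{r})-\boldsymbol{\varphi}(\mathbf{r})\mathbf{M}\int_{\mathcal{A}}\boldsymbol{\varphi}^{\mathsf{H}}(\mathbf{r}')f(\mathbf{r}')\,\mathrm{d}\mathbf{r}'$. Let $C_\varphi=T_{-\mathbf{I}_N}$ (kernel $\delta(\mathbf{r}-\mathbf{r}')+\boldsymbol{\varphi}(\mathbf{r})\boldsymbol{\varphi}^{\mathsf{H}}(\mathbf{r}')$)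 and $\overline{B}_\varphi=T_{\overline{\mathbf{B}}_{\boldsymbol\Psi}}$ with $\overline{\mathbf{B}}_{\boldsymbol\Psi}=\mathbf{U}\,\mathrm{diag}(\overline{\lambda}_1,\ldots,\overline{\lambda}_N)\mathbf{U}^{\mathsf{H}}$, $\overline{\lambda}_n=\frac{1+\sqrt{1+\lambda_n}}{\lambda_n\sqrt{1+\lambda_n}}$. Then $\overline{B}_\varphi C_\varphi\overline{B}_\varphi$ is the identity operator, i.e. in kernel form $\iint_{\mathcal{A}^2}\overline{B}_\varphi(\mathbf{r}_1,\mathbf{r})C_\varphi(\mathbf{r},\mathbf{r}')\overline{B}_\varphi(\mathbf{r}',\mathbf{r}_2)\,\mathrm{d}\mathbf{r}'\mathrm{d}\mathbf{r}=\delta(\mathbf{r}_1-\mathbf{r}_2)$.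
   Context: Kernels containing $\delta(\mathbf{r}-\mathbf{r}')$ denote the identity plus a finite-rank integral operator; kernel identities with $\delta$ on the right mean operator identities equal to the identity. *)

(* Defs.v *)
From mathcomp Require Import all_boot all_order all_algebra.
From mathcomp Require Import all_classical all_reals all_analysis.
From mathcomp Require Import complex.
Import Order.TTheory GRing.Theory Num.Theory.

Set Implicit Arguments.
Unset Strict Implicit.
Unset Printing Implicit Defensive.

Local Open Scope ring_scope.
Local Open Scope classical_set_scope.
Local Open Scope complex_scope.

Definition R3 (R : realType) := ((R * R) * R)%type.

Definition leb3 (R : realType) :=
  ((@lebesgue_measure R \x @lebesgue_measure R) \x @lebesgue_measure R)%E.

Definition cRe (R : realType) (z : R[i]) : R := complex.Re z.
Definition cIm (R : realType) (z : R[i]) : R := complex.Im z.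

Definition cnorm2 (R : realType) (z : R[i]) : R := cRe z ^+ 2 + cIm z ^+ 2.

(* f : R^3 -> C is (a representative of) an element of L^2(A):
   measurable on A and |f|^2 Lebesgue integrable over A. *)
Definition L2 (R : realType) (A : set (R3 R)) (f : R3 R -> R[i]) : Prop :=
  [/\ measurable_fun A (fun x => cRe (f x)),
      measurable_fun A (fun x => cIm (f x)) &
      (@leb3 R).-integrable A (fun x => (cnorm2 (f x))%:E)].

Definition cint (R : realType) (A : set (R3 R)) (f : R3 R -> R[i]) : R[i] :=
  (Rintegral (@leb3 R) A (fun x => cRe (f x)))%:C
  + 'i * (Rintegral (@leb3 R) A (fun x => cIm (f x)))%:C.

Definition parallel (R : realType) (A : set (R3 R)) (f g : R3 R -> R[i]) : Prop :=
  exists c : R[i],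
    {ae @leb3 R, forall x, A x -> f x = c * g x} \/
    {ae @leb3 R, forall x, A x -> g x = c * f x}.

Definition mxH (R : realType) (m n : nat) (M : 'M[R[i]]_(m, n)) : 'M[R[i]]_(n, m) :=
  (map_mx conjc M)^T.

Definition hermitian (R : realType) (N : nat) (M : 'M[R[i]]_N) : Prop :=
  mxH M = M.
Definition posdef (R : realType) (N : nat) (M : 'M[R[i]]_N) : Prop :=
  hermitian M /\
  forall u : 'cV[R[i]]_N, u != 0 -> 0 < (mxH u *m M *m u) ord0 ord0.

Definition unitary (R : realType) (N : nat) (U : 'M[R[i]]_N) : Prop :=
  U *m mxH U = 1%:M /\ mxH U *m U = 1%:M.

Definition phirow (R : realType) (N : nat) (phi : 'I_N -> R3 R -> R[i])
  (r : R3 R) : 'rV[R[i]]_N := \row_i phi i r.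

Definition corr (R : realType) (N : nat) (A : set (R3 R))
  (phi : 'I_N -> R3 R -> R[i]) : 'M[R[i]]_N :=
  \matrix_(i, j) cint A (fun r => conjc (phi i r) * phi j r).

Definition coefs (R : realType) (N : nat) (A : set (R3 R))
  (phi : 'I_N -> R3 R -> R[i]) (f : R3 R -> R[i]) : 'cV[R[i]]_N :=
  \col_i cint A (fun r => conjc (phi i r) * f r).

Definition Top (R : realType) (N : nat) (A : set (R3 R))
  (phi : 'I_N -> R3 R -> R[i]) (M : 'M[R[i]]_N) (f : R3 R -> R[i]) :
  R3 R -> R[i] :=
  fun r => f r - (phirow phi r *m M *m coefs A phi f) ord0 ord0.

Definition lambdabar (R : realType) (l : R) : R :=
  (1 + Num.sqrt (1 + l)) / (l * Num.sqrt (1 + l)).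

Definition Bbar (R : realType) (N : nat) (U : 'M[R[i]]_N) (lam : 'I_N -> R) :
  'M[R[i]]_N :=
  U *m diag_mx (\row_i (lambdabar (lam i))%:C) *m mxH U.

(* Main.v *)
Require Import Defs.
From mathcomp Require Import all_boot all_order all_algebra.
From mathcomp Require Import all_classical all_reals all_analysis.
From mathcomp Require Import complex ring lra measurable_realfun.
Import Order.TTheory GRing.Theory Num.Theory.
Local Open Scope ring_scope.
Local Open Scope classical_set_scope.
Local Open Scope complex_scope.
Section S.
Variable R : realType.
Variable A : set (R3 R).
Hypothesis mA : measurable A.
Lemma cReM (a b : R[i]) : cRe (a * b) = cRe a * cRe b - cIm a * cIm b.
Proof. by case: a => a1 a2; case: b => b1 b2. Qed.
Lemma cImM (a b : R[i]) : cIm (a * b) = cRe a * cIm b + cIm a * cRe b.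
Proof. by case: a => a1 a2; case: b => b1 b2. Qed.
Lemma cReD (a b : R[i]) : cRe (a + b) = cRe a + cRe b.
Proof. by case: a => a1 a2; case: b => b1 b2. Qed.
Lemma cImD (a b : R[i]) : cIm (a + b) = cIm a + cIm b.
Proof. by case: a => a1 a2; case: b => b1 b2. Qed.
Lemma cReJ (a : R[i]) : cRe (a^*) = cRe a.
Proof. by case: a. Qed.
Lemma cImJ (a : R[i]) : cIm (a^*) = - cIm a.
Proof. by case: a. Qed.
Lemma cdecomp (a : R[i]) : a = (cRe a)%:C + 'i * (cIm a)%:C.
Proof. by case: a => a1 a2; apply/eqP; rewrite eq_complex /=; apply/andP; split; apply/eqP; ring. Qed.

Definition rint (h : R3 R -> R) := (@leb3 R).-integrable A (EFin \o h).
Definition cintg (h : R3 R -> R[i]) := rint (fun x => cRe (h x)) /\ rint (fun x => cIm (h x)).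

Lemma rintD f g : rint f -> rint g -> rint (fun x => f x + g x).
Proof.
move=> hf hg; have := @integrableD _ _ _ (@leb3 R) A mA _ _ hf hg.
by apply: eq_integrable => // x _ /=; rewrite EFinD.
Qed.
Lemma rintZ k f : rint f -> rint (fun x => k * f x).
Proof.
move=> hf; have := @integrableZl _ _ _ (@leb3 R) A mA k _ hf.
by apply: eq_integrable => // x _ /=; rewrite EFinM.
Qed.
Lemma rint0 : rint (fun _ => 0).
Proof. have := @integrable0 _ _ _ (@leb3 R) A. by apply: eq_integrable. Qed.

Lemma RintD f g : rint f -> rint g -> Rintegral (@leb3 R) A (fun x => f x + g x)
  = Rintegral (@leb3 R) A f + Rintegral (@leb3 R) A g.
Proof. by move=> hf hg; rewrite (@RintegralD _ _ _ (@leb3 R) A f g mA). Qed.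
Lemma RintZ k f : rint f -> Rintegral (@leb3 R) A (fun x => k * f x)
  = k * Rintegral (@leb3 R) A f.
Proof. by move=> hf; rewrite (@RintegralZl _ _ _ (@leb3 R) A f k mA). Qed.

Lemma cintD h1 h2 : cintg h1 -> cintg h2 ->
  cintg (fun x => h1 x + h2 x) /\ cint A (fun x => h1 x + h2 x) = cint A h1 + cint A h2.
Proof.
move=> [r1 i1] [r2 i2].
rewrite /cintg /cint.
have -> : (fun x => cRe (h1 x + h2 x)) = (fun x => cRe (h1 x) + cRe (h2 x)).
  by apply/funext => x; rewrite cReD.
have -> : (fun x => cIm (h1 x + h2 x)) = (fun x => cIm (h1 x) + cIm (h2 x)).
  by apply/funext => x; rewrite cImD.
split; first by split; apply: rintD.
rewrite !RintD //.
rewrite !rmorphD /=. ring.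
Qed.

Lemma cintZ w h : cintg h ->
  cintg (fun x => w * h x) /\ cint A (fun x => w * h x) = w * cint A h.
Proof.
move=> [r1 i1].
rewrite /cintg /cint.
have -> : (fun x => cRe (w * h x)) = (fun x => cRe w * cRe (h x) + (- cIm w) * cIm (h x)).
  by apply/funext => x; rewrite cReM mulNr.
have -> : (fun x => cIm (w * h x)) = (fun x => cRe w * cIm (h x) + cIm w * cRe (h x)).
  by apply/funext => x; rewrite cImM.
split; first by split; apply: rintD; apply: rintZ.
rewrite !RintD //; try by apply: rintZ.
rewrite !RintZ //.
set X := Rintegral (@leb3 R) A (fun x => cRe (h x)).
set Y := Rintegral (@leb3 R) A (fun x => cIm (h x)).
rewrite [in RHS](cdecomp w).
apply/eqP; rewrite -subr_eq0; apply/eqP.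
rewrite (_ : _ - _ = - ('i ^+ 2 + 1) * ((cIm w)%:C * Y%:C)); last first.
  rewrite !rmorphD !rmorphM !rmorphN /=. ring.
by rewrite sqr_i addNr oppr0 mul0r.
Qed.

Lemma cint0 : cintg (fun _ => 0) /\ cint A (fun _ => 0) = 0.
Proof.
split; first by split; exact: rint0.
have h0 : Rintegral (@leb3 R) A (fun _ => (0:R)) = 0.
  by have := @RintZ 0 (fun _ => 0) rint0; rewrite !mul0r.
by rewrite /cint /= h0 mulr0 addr0.
Qed.

Lemma cintL2 a b : L2 A a -> L2 A b -> cintg (fun x => (a x)^* * b x).
Proof.
move=> [ma1 ma2 ia] [mb1 mb2 ib].
have ig : rint (fun x => cnorm2 (a x) + cnorm2 (b x)) by apply: rintD.
split.
- apply: (@le_integrable _ _ _ (@leb3 R) A mA _ (EFin \o (fun x => cnorm2 (a x) + cnorm2 (b x)))) => //.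
    apply/measurable_EFinP.
    have -> : (fun x => cRe ((a x)^* * b x)) = (fun x => cRe (a x) * cRe (b x) + cIm (a x) * cIm (b x)).
      by apply/funext => x; rewrite cReM cReJ cImJ mulNr opprK.
    by apply: measurable_funD; apply: measurable_funM.
  move=> x Ax /=; rewrite lee_fin.
  rewrite [X in _ <= X]ger0_norm; last by rewrite /cnorm2 !addr_ge0 // sqr_ge0.
  rewrite cReM cReJ cImJ /cnorm2.
  move: (cRe (a x)) (cIm (a x)) (cRe (b x)) (cIm (b x)) => p q u v.
  have h1 := sqr_ge0 (p - u); have h2 := sqr_ge0 (p + u);
  have h3 := sqr_ge0 (q - v); have h4 := sqr_ge0 (q + v);
  have h5 := sqr_ge0 (p - v); have h6 := sqr_ge0 (p + v);
  have h7 := sqr_ge0 (q - u); have h8 := sqr_ge0 (q + u).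
  rewrite ler_norml; apply/andP; split; nra.
- apply: (@le_integrable _ _ _ (@leb3 R) A mA _ (EFin \o (fun x => cnorm2 (a x) + cnorm2 (b x)))) => //.
    apply/measurable_EFinP.
    have -> : (fun x => cIm ((a x)^* * b x)) = (fun x => cRe (a x) * cIm (b x) + (- cIm (a x)) * cRe (b x)).
      by apply/funext => x; rewrite cImM cReJ cImJ.
    apply: measurable_funD; apply: measurable_funM => //.
    exact: measurable_funN.
  move=> x Ax /=; rewrite lee_fin.
  rewrite [X in _ <= X]ger0_norm; last by rewrite /cnorm2 !addr_ge0 // sqr_ge0.
  rewrite cImM cReJ cImJ /cnorm2.
  move: (cRe (a x)) (cIm (a x)) (cRe (b x)) (cIm (b x)) => p q u v.
  have h1 := sqr_ge0 (p - u); have h2 := sqr_ge0 (p + u);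
  have h3 := sqr_ge0 (q - v); have h4 := sqr_ge0 (q + v);
  have h5 := sqr_ge0 (p - v); have h6 := sqr_ge0 (p + v);
  have h7 := sqr_ge0 (q - u); have h8 := sqr_ge0 (q + u).
  rewrite ler_norml; apply/andP; split; nra.
Qed.

Arguments cintD [h1 h2].
Arguments cintZ w [h].
Arguments cintL2 [a b].
Variable N : nat.
Variable phi : 'I_N -> R3 R -> R[i].
Hypothesis phiL2 : forall n, L2 A (phi n).

Definition good g := forall i, cintg (fun x => (phi i x)^* * g x).
Definition sh (g : R3 R -> R[i]) (w : 'cV[R[i]]_N) :=
  fun r => g r + (phirow phi r *m w) ord0 ord0.

Lemma cint_sum (s : seq 'I_N) (F : 'I_N -> R3 R -> R[i]) :
  (forall k, cintg (F k)) ->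
  cintg (fun x => \sum_(k <- s) F k x) /\
  cint A (fun x => \sum_(k <- s) F k x) = \sum_(k <- s) cint A (F k).
Proof.
move=> hF; elim: s => [|k s [IH1 IH2]].
  have -> : (fun x => \sum_(k <- [::]) F k x) = (fun _ => 0).
    by apply/funext => x; rewrite big_nil.
  by rewrite big_nil; exact: cint0.
have -> : (fun x => \sum_(j <- k :: s) F j x) = (fun x => F k x + \sum_(j <- s) F j x).
  by apply/funext => x; rewrite big_cons.
have [h1 h2] := cintD (hF k) IH1.
by split => //; rewrite h2 IH2 big_cons.
Qed.

Lemma sh_good g w : good g ->
  good (sh g w) /\ coefs A phi (sh g w) = coefs A phi g + corr A phi *m w.
Proof.
move=> hg.
have key : forall i, cintg (fun x => (phi i x)^* * sh g w x) /\
   cint A (fun x => (phi i x)^* * sh g w x) =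
   cint A (fun x => (phi i x)^* * g x) + \sum_k cint A (fun x => (phi i x)^* * phi k x) * w k ord0.
  move=> i.
  have -> : (fun x => (phi i x)^* * sh g w x) = (fun x => (phi i x)^* * g x +
      \sum_(k <- index_enum 'I_N) (fun k x => w k ord0 * ((phi i x)^* * phi k x)) k x).
    apply/funext => x; rewrite /sh mulrDr !mxE mulr_sumr; congr (_ + _).
    by apply: eq_bigr => k _; rewrite !mxE; ring.
  have hF : forall k, cintg (fun x => w k ord0 * ((phi i x)^* * phi k x)).
    by move=> k; have [] := cintZ (w k ord0) (cintL2 (phiL2 i) (phiL2 k)).
  have [s1 s2] := cint_sum (index_enum 'I_N) (fun k x => w k ord0 * ((phi i x)^* * phi k x)) hF.
  have [d1 d2] := cintD (hg i) s1.
  split => //; rewrite d2 s2; congr (_ + _).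
  apply: eq_bigr => k _; have [_ ->] := cintZ (w k ord0) (cintL2 (phiL2 i) (phiL2 k)).
  by rewrite mulrC.
split; first by move=> i; have [] := key i.
apply/matrixP => i j; rewrite (ord1 j) !mxE; have [_ ->] := key i.
by congr (_ + _); apply: eq_bigr => k _; rewrite !mxE.
Qed.

Lemma TopE M g : Top A phi M g = sh g (- (M *m coefs A phi g)).
Proof. by apply/funext => r; rewrite /Top /sh mulmxN -mulmxA !mxE. Qed.

Lemma sh_sh g w1 w2 : sh (sh g w1) w2 = sh g (w1 + w2).
Proof. by apply/funext => r; rewrite /sh mulmxDr [in RHS]mxE addrA. Qed.

Lemma lambdabar_eq (l : R) : 0 < l ->
  1 - 2 * lambdabar l * (1 + l) + l * lambdabar l ^+ 2 * (1 + l) = 0.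
Proof.
move=> hl; rewrite /lambdabar.
have h1 : 0 <= 1 + l by lra.
have hs := sqr_sqrtr h1.
set s := Num.sqrt (1 + l) in hs *.
have s0' : 0 <= s by exact: sqrtr_ge0.
have sgt : 1 < s by nra.
have -> : l = s ^+ 2 - 1 by rewrite hs; ring.
have s0 : s != 0 by apply/eqP => e; rewrite e in sgt; lra.
have s1 : s ^+ 2 - 1 != 0 by apply/eqP => e; nra.
field; apply/andP; split => //.
Qed.

End S.

Theorem lemma6 (R : realType) (N : nat) (A : set (R3 R))
  (phi : 'I_N -> R3 R -> R[i]) (U : 'M[R[i]]_N) (lam : 'I_N -> R) :
  measurable A ->
  (forall n, L2 A (phi n)) ->
  (forall n m, n != m -> ~ parallel A (phi n) (phi m)) ->
  posdef (corr A phi) ->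
  unitary U ->
  (forall n, 0 < lam n) ->
  corr A phi = U *m diag_mx (\row_n (lam n)%:C) *m mxH U ->
  forall f : R3 R -> R[i], L2 A f ->
  forall r, A r ->
    Top A phi (Bbar U lam) (Top A phi (- 1%:M) (Top A phi (Bbar U lam) f)) r
    = f r.
Proof.
move=> mA hphi _ _ [UQ QU] hlam hPsi f hf r Ar.
have gf : @good R A N phi f := fun i => @cintL2 R A mA _ _ (hphi i) hf.
rewrite !TopE.
rewrite !(proj2 (@sh_good R A mA N phi hphi f _ gf)).
rewrite !sh_sh.
rewrite !(proj2 (@sh_good R A mA N phi hphi f _ gf)).
rewrite /sh -[RHS]addr0; congr (_ + _).
have HW : forall W : 'cV[R[i]]_N, W = 0 -> (phirow phi r *m W) ord0 ord0 = 0.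
  by move=> W ->; rewrite mulmx0 mxE.
apply: HW.
set Q := mxH U.
have key : forall W : 'cV[R[i]]_N, Q *m W = 0 -> W = 0.
  by move=> W h; rewrite -[W]mul1mx -UQ -mulmxA -/Q h mulmx0.
apply: key.
have QB : forall x : 'cV[R[i]]_N, Q *m (Bbar U lam *m x) = diag_mx (\row_i (lambdabar (lam i))%:C) *m (Q *m x).
  by move=> x; rewrite /Bbar -/Q !mulmxA QU mul1mx.
have QP : forall x : 'cV[R[i]]_N, Q *m (corr A phi *m x) = diag_mx (\row_i (lam i)%:C) *m (Q *m x).
  by move=> x; rewrite hPsi -/Q !mulmxA QU mul1mx.
rewrite !mulNmx !mul1mx !opprK.
rewrite !(mulmxDr, mulmxN, QB, QP).
set y := Q *m coefs A phi f.
apply/matrixP => i j; rewrite !mul_diag_mx !mxE.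
move: (\sum_(j0 < N) _) => yy.
have H := @lambdabar_eq R (lam i) (hlam i).
move: (lam i) (lambdabar (lam i)) H => l b H.
apply: (@eq_trans _ _ (yy * (1 - 2 * b * (1 + l) + l * b ^+ 2 * (1 + l))%:C)); last by rewrite H mulr0.
rewrite ?rmorphD ?rmorphM ?rmorphN ?rmorphXn ?rmorph1 ?rmorphB /=.
ring.
Qed.
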